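(* Let $G$ be a group, let $p,q\geq 1$ be integers, and let $A\in M_{2p,2q}(\mathbb{C}G)$ be written as a block matrix $$A=\begin{pmatrix} A_{1,1} & A_{1,2}\\ A_{2,1} & A_{2,2}\end{pmatrix}$$ with each block of size $p\times q$. Suppose that $A_{1,1}$ and $A_{2,2}$ both have constant row sum, equal to the same element $r_1\in\mathbb{C}G$, and both have constant column sum, equal to the same element $c_1\in\mathbb{C}G$; and that $A_{1,2}$ and $A_{2,1}$ both have constant row sum, equal to the same element $r_2\in\mathbb{C}G$, and both have constant column sum, equal to the same element $c_2\in\mathbb{C}G$. Then $Q_p A Q_q = A$, where for a positive integer $m$ $$Q_m=\begin{pmatrix} I_m-\frac1m J_m & \frac1m J_m\\ \frac1m J_m & I_m-\frac1m J_m\end{pmatrix}\in M_{2m}(\mathbb{C}G).$$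
   Context: $\mathbb{C}G$ denotes the complex group algebra of $G$, with neutral element $1_G$; $M_{a,b}(\mathbb{C}G)$ is the set of $a\times b$ matrices with entries in $\mathbb{C}G$. $I_m\in M_m(\mathbb{C}G)$ is the identity matrix (diagonal entries $1_G$), and $J_m\in M_m(\mathbb{C}G)$ is the matrix all of whose entries are $1_G$. ''Constant row sum $r$'' means every row of the block sums (in $\mathbb{C}G$) to $r$; similarly for column sums. *)

(* Defs.v *)
(* Complex group algebra C[G] of an arbitrary (possibly
   infinite) group G, built as the algebra of finitely supported functions
   G -> C on top of multinomials' [malg] carrier, with convolution product. *)
From HB Require Import structures.
From mathcomp Require Import all_boot all_algebra.
From mathcomp Require Import finmap.
From mathcomp Require Import Rstruct.
From mathcomp.real_closed Require Import complex.
From mathcomp.multinomials Require Import xfinmap monalg.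

Set Implicit Arguments.
Unset Strict Implicit.
Unset Printing Implicit Defensive.

Import GRing.Theory.

Local Open Scope fset.
Local Open Scope ring_scope.

HB.mixin Record Choice_isGrp G of Choice G := {
  gone : G;
  gmul : G -> G -> G;
  ginv : G -> G;
  gmulA : associative gmul;
  gmul1g : left_id gone gmul;
  gmulg1 : right_id gone gmul;
  gmulVg : left_inverse gone ginv gmul
}.

#[short(type="grpType")]
HB.structure Definition Grp := { G of Choice G & Choice_isGrp G }.

Definition Cplx : numClosedFieldType := (Rdefinitions.R)[i].

(* Ring structure of the monoid algebra {malg R[G]} for a group G
   (adapted verbatim from multinomials' monalg.v, whose ring instance
   requires a "monomType"; a group is not one since it has units).     *)
Section GrpAlgRing.
Context (K : grpType) (R : ringType).

Implicit Types (g : {malg R[K]}) (k l : K).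

Local Notation "1%G" := (@gone K).
Local Notation "x *G y" := (@gmul K x y) (at level 40, left associativity).

Definition ggone : {malg R[K]} := << 1%G >>.

Definition ggmul g1 g2 : {malg R[K]} :=
  \sum_(k1 <- msupp g1) \sum_(k2 <- msupp g2)
     << g1@_k1 * g2@_k2 *g (k1 *G k2) >>.

Lemma ggmull g1 g2 :
  ggmul g1 g2 = \sum_(k1 <- msupp g1) \sum_(k2 <- msupp g2)
     << g1@_k1 * g2@_k2 *g (k1 *G k2) >>.
Proof. by []. Qed.

Lemma ggmulr g1 g2 :
  ggmul g1 g2 = \sum_(k2 <- msupp g2) \sum_(k1 <- msupp g1)
     << g1@_k1 * g2@_k2 *g (k1 *G k2) >>.
Proof. by rewrite ggmull exchange_big. Qed.

Lemma ggmullw (d1 d2 : {fset K}) g1 g2 :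
  msupp g1 `<=` d1 -> msupp g2 `<=` d2 ->
  ggmul g1 g2 = \sum_(k1 <- d1) \sum_(k2 <- d2)
     << g1@_k1 * g2@_k2 *g (k1 *G k2) >>.
Proof.
move=> le_d1 le_d2; rewrite ggmull (big_fset_incl _ le_d1) /=.
  apply/eq_bigr=> k1 _; apply/big_fset_incl => // k _ /mcoeff_outdom ->.
  by rewrite mulr0 monalgU0.
move=> k _ /mcoeff_outdom g1k.
by rewrite big1 => // k' _; rewrite g1k mul0r monalgU0.
Qed.

Lemma ggmulrw (d1 d2 : {fset K}) g1 g2 : msupp g1 `<=` d1 -> msupp g2 `<=` d2
  -> ggmul g1 g2 = \sum_(k2 <- d2) \sum_(k1 <- d1)
     << g1@_k1 * g2@_k2 *g (k1 *G k2) >>.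
Proof. by move=> le_d1 le_d2; rewrite (ggmullw le_d1 le_d2) exchange_big. Qed.

Definition ggmullwl (d1 : {fset K}) {g1 g2} (le : msupp g1 `<=` d1) :=
  @ggmullw _ _ g1 g2 le (fsubset_refl _).

Definition ggmulrwl (d2 : {fset K}) {g1 g2} (le : msupp g2 `<=` d2) :=
  @ggmulrw _ _ g1 g2 (fsubset_refl _) le.

Lemma ggmul0g : left_zero 0 ggmul.
Proof. by move=> g; rewrite ggmull msupp0 big_seq_fset0. Qed.

Lemma ggmulg0 : right_zero 0 ggmul.
Proof. by move=> g; rewrite ggmulr msupp0 big_seq_fset0. Qed.

Lemma ggmulUg c k g :
  ggmul << c *g k >> g = \sum_(k' <- msupp g) << c * g@_k' *g k *G k' >>.
Proof.
rewrite (ggmullw msuppU_le (fsubset_refl _)) big_seq_fset1.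
by apply/eq_bigr => k' _; rewrite mcoeffUU.
Qed.

Lemma ggmulgU c k g :
  ggmul g << c *g k >> = \sum_(k' <- msupp g) << g@_k' * c *g k' *G k >>.
Proof.
rewrite (ggmulrw (fsubset_refl _) msuppU_le) big_seq_fset1.
by apply/eq_bigr=> k' _; rewrite mcoeffUU.
Qed.

Lemma ggmulUU c1 c2 k1 k2 :
  ggmul << c1 *g k1 >> << c2 *g k2 >> = << c1 * c2 *g k1 *G k2 >>.
Proof. by rewrite (ggmulrw msuppU_le msuppU_le) !big_seq_fset1 !mcoeffUU. Qed.

Lemma ggmulEl1 g1 g2 :
  ggmul g1 g2 = \sum_(k1 <- msupp g1) ggmul << g1@_k1 *g k1 >> g2.
Proof. by apply/eq_bigr=> k _; rewrite ggmulUg. Qed.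

Lemma ggmulEr1 g1 g2 :
  ggmul g1 g2 = \sum_(k2 <- msupp g2) ggmul g1 << g2@_k2 *g k2 >>.
Proof. by rewrite ggmulr; apply/eq_bigr=> k _; rewrite ggmulgU. Qed.

Lemma ggmul1g : left_id ggone ggmul.
Proof.
move=> g; rewrite ggmulUg [RHS]monalgE.
by apply/eq_bigr=> kg _; rewrite mul1r gmul1g.
Qed.

Lemma ggmulg1 : right_id ggone ggmul.
Proof.
move=> g; rewrite ggmulgU [RHS]monalgE.
by apply/eq_bigr=> k _; rewrite mulr1 gmulg1.
Qed.

Lemma ggmulgDl : left_distributive ggmul +%R.
Proof.
move=> g1 g2 g; rewrite [in RHS](ggmullwl (fsubsetUl _ (msupp g2))).
rewrite [in RHS](ggmullwl (fsubsetUr (msupp g1) _)) (ggmullwl (msuppD_le _ _)).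
rewrite -big_split /=; apply/eq_bigr=> k1 _.
rewrite -big_split /=; apply/eq_bigr=> k2 _.
by rewrite mcoeffD mulrDl monalgUD.
Qed.

Lemma ggmulgDr : right_distributive ggmul +%R.
Proof.
move=> g g1 g2; rewrite [in RHS](ggmulrwl (fsubsetUl _ (msupp g2))).
rewrite [in RHS](ggmulrwl (fsubsetUr (msupp g1) _)) (ggmulrwl (msuppD_le _ _)).
rewrite -big_split /=; apply/eq_bigr => k1 _.
rewrite -big_split /=; apply/eq_bigr => k2 _.
by rewrite mcoeffD mulrDr monalgUD.
Qed.

Lemma ggmulA : associative ggmul.
Proof.
move=> g1 g2 g3.
rewrite [RHS](big_morph (ggmul^~ _) (fun _ _ => ggmulgDl _ _ _) (ggmul0g _)).
rewrite ggmulEl1; apply/eq_bigr=> k1 _.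
rewrite [LHS](big_morph (ggmul _) (fun _ _ => ggmulgDr _ _ _) (ggmulg0 _)).
rewrite [RHS](big_morph (ggmul^~ _) (fun _ _ => ggmulgDl _ _ _) (ggmul0g _)).
apply/eq_bigr=> k2 _.
rewrite [LHS](big_morph (ggmul _) (fun _ _ => ggmulgDr _ _ _) (ggmulg0 _)).
by rewrite ggmulEr1; apply/eq_bigr=> k3 _; rewrite !ggmulUU mulrA gmulA.
Qed.

Lemma ggoner_eq0 : ggone != 0.
Proof. by apply/eqP/malgP=> /(_ 1%G) /eqP; rewrite !mcoeffsE oner_eq0. Qed.

End GrpAlgRing.

(* The group algebra carrier, as a fresh type so that its ring instance
   does not interfere with multinomials' own instances.                 *)
Definition grpalg (R : ringType) (G : grpType) := {malg R[G]}.
HB.instance Definition _ (R : ringType) (G : grpType) :=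
  GRing.Lmodule.on (grpalg R G).
HB.instance Definition _ (R : ringType) (G : grpType) :=
  GRing.Zmodule_isRing.Build (grpalg R G)
    (@ggmulA G R) (@ggmul1g G R) (@ggmulg1 G R)
    (@ggmulgDl G R) (@ggmulgDr G R) (@ggoner_eq0 G R).

Definition CG (G : grpType) : ringType := grpalg Cplx G.

Definition const_row_sum (G : grpType) (a b : nat) (B : 'M[CG G]_(a, b))
    (r : CG G) : Prop :=
  forall i : 'I_a, \sum_(j < b) B i j = r.

Definition const_col_sum (G : grpType) (a b : nat) (B : 'M[CG G]_(a, b))
    (c : CG G) : Prop :=
  forall j : 'I_b, \sum_(i < a) B i j = c.

Definition Jmx (G : grpType) (m : nat) : 'M[CG G]_m := const_mx 1.

Definition Jmx_div (G : grpType) (m : nat) : 'M[CG G]_m :=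
  map_mx (fun x : CG G => ((m%:R : Cplx)^-1) *: x) (Jmx G m).

Definition Qmx (G : grpType) (m : nat) : 'M[CG G]_(m + m) :=
  block_mx (1%:M - Jmx_div G m) (Jmx_div G m)
           (Jmx_div G m) (1%:M - Jmx_div G m).

(* Main.v *)
Require Import Defs.
From HB Require Import structures.
From mathcomp Require Import all_boot all_algebra.
From mathcomp Require Import finmap.
From mathcomp.multinomials Require Import xfinmap monalg.
Import GRing.Theory Num.Theory.
Local Open Scope ring_scope.

Section S.
Variable G : grpType.

Lemma UZ (a b : Cplx) (k : G) : << (a * b) *g k >> = a *: (<< b *g k >> : {malg Cplx[G]}).
Proof. by apply/malgP => k'; rewrite mcoeffZ !mcoeffU mulrnAr. Qed.

Lemma scal_mull (a : Cplx) (x y : CG G) : (a *: x) * y = a *: (x * y).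
Proof.
rewrite /GRing.mul /= (ggmullw (msuppZ_le a x) (fsubset_refl _)) ggmull.
rewrite scaler_sumr; apply: eq_bigr => k1 _; rewrite scaler_sumr; apply: eq_bigr => k2 _.
by rewrite mcoeffZ -mulrA UZ.
Qed.

Lemma scal_mulr (a : Cplx) (x y : CG G) : x * (a *: y) = a *: (x * y).
Proof.
rewrite /GRing.mul /= (ggmullw (fsubset_refl _) (msuppZ_le a y)) ggmull.
rewrite scaler_sumr; apply: eq_bigr => k1 _; rewrite scaler_sumr; apply: eq_bigr => k2 _.
by rewrite mcoeffZ mulrCA UZ.
Qed.

Definition sc (m : nat) : CG G := ((m%:R : Cplx)^-1) *: (1 : CG G).

Lemma scl m x : sc m * x = (m%:R : Cplx)^-1 *: x.
Proof. by rewrite scal_mull mul1r. Qed.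
Lemma scr m x : x * sc m = (m%:R : Cplx)^-1 *: x.
Proof. by rewrite scal_mulr mulr1. Qed.
Lemma sc_comm m x : sc m * x = x * sc m.
Proof. by rewrite scl scr. Qed.

Lemma scMn m x : (0 < m)%N -> (x *+ m) * sc m = x.
Proof.
move=> hm; rewrite scr -scalerMnr scalerMnl -mulr_natr mulVf ?scale1r //.
by rewrite pnatr_eq0 -lt0n.
Qed.

Lemma Jmx_divE m i j : Jmx_div G m i j = sc m.
Proof. by rewrite !mxE. Qed.

Lemma mulJl m n (B : 'M[CG G]_(m, n)) c :
  const_col_sum B c -> Jmx_div G m *m B = const_mx (sc m * c).
Proof.
move=> hc; apply/matrixP => i j; rewrite !mxE -(hc j) mulr_sumr.
by apply: eq_bigr => k _; rewrite Jmx_divE.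
Qed.

Lemma mulJr m n (B : 'M[CG G]_(m, n)) r :
  const_row_sum B r -> B *m Jmx_div G n = const_mx (r * sc n).
Proof.
move=> hc; apply/matrixP => i j; rewrite !mxE -(hc i) mulr_suml.
by apply: eq_bigr => k _; rewrite Jmx_divE.
Qed.

Lemma crs_const m n (x : CG G) : const_row_sum (const_mx x : 'M_(m, n)) (x *+ n).
Proof. by move=> i; rewrite (eq_bigr (fun=> x)) ?sumr_const ?card_ord // => j; rewrite mxE. Qed.

Lemma crs_add m n (B C : 'M[CG G]_(m, n)) r s :
  const_row_sum B r -> const_row_sum C s -> const_row_sum (B + C) (r + s).
Proof. by move=> hB hC i; rewrite -(hB i) -(hC i) -big_split; apply: eq_bigr => j _; rewrite mxE. Qed.
Lemma crs_opp m n (B : 'M[CG G]_(m, n)) r :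
  const_row_sum B r -> const_row_sum (- B) (- r).
Proof. by move=> hB i; rewrite -(hB i) -sumrN; apply: eq_bigr => j _; rewrite mxE. Qed.

Lemma total_sum m n (B : 'M[CG G]_(m, n)) r c :
  const_row_sum B r -> const_col_sum B c -> r *+ m = c *+ n.
Proof.
move=> hr hc.
have -> : r *+ m = \sum_(i < m) \sum_(j < n) B i j.
  by rewrite (eq_bigr (fun=> r)) ?sumr_const ?card_ord // => i _; rewrite (hr i).
rewrite exchange_big (eq_bigr (fun=> c)) ?sumr_const ?card_ord // => j _.
Qed.

Lemma key m n (hm : (0 < m)%N) (hn : (0 < n)%N) (B : 'M[CG G]_(m, n)) r c :
  const_row_sum B r -> const_col_sum B c -> r * sc n = sc m * c.
Proof.
move=> hr hc; have e := @total_sum m n B r c hr hc.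
rewrite -[RHS](scMn n _ hn) -mulrnAr -e (sc_comm m (r *+ m)) scMn //.
Qed.
Lemma mulJr2 m n (B : 'M[CG G]_(m, n)) r y :
  const_row_sum B r -> r * sc n = y -> B *m Jmx_div G n = const_mx y.
Proof. by move=> hr e; rewrite (mulJr _ _ _ _ hr) e. Qed.

Lemma mulJc m n (x : CG G) (hn : (0 < n)%N) :
  (const_mx x : 'M_(m, n)) *m Jmx_div G n = const_mx x.
Proof. by rewrite (mulJr _ _ _ _ (crs_const m n x)) scMn. Qed.
End S.


Lemma z1 (V : zmodType) (A u v : V) : A - u + v - v + u = A.
Proof. by rewrite addrK subrK. Qed.
Lemma z2 (V : zmodType) (A u v : V) : v + (A - v + u - u) = A.
Proof. by rewrite addrK addrC subrK. Qed.
Lemma z3 (V : zmodType) (A u v : V) : u + (A - v) - u + v = A.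
Proof. by rewrite [u + _]addrC addrK subrK. Qed.
Lemma z4 (V : zmodType) (A u v : V) : u + (v + (A - u) - v) = A.
Proof. by rewrite [v + _]addrC addrK addrC subrK. Qed.

Lemma gen (R : nzRingType) p q (Jp : 'M[R]_p) (Jq : 'M[R]_q) (a1 a2 : R)
  (A11 A12 A21 A22 : 'M[R]_(p, q)) :
  Jp *m A11 = const_mx a1 -> Jp *m A22 = const_mx a1 ->
  Jp *m A12 = const_mx a2 -> Jp *m A21 = const_mx a2 ->
  A11 *m Jq = const_mx a1 -> A22 *m Jq = const_mx a1 ->
  A12 *m Jq = const_mx a2 -> A21 *m Jq = const_mx a2 ->
  (forall x, (const_mx x : 'M[R]_(p, q)) *m Jq = const_mx x) ->
  block_mx (1%:M - Jp) Jp Jp (1%:M - Jp) *m block_mx A11 A12 A21 A22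
    *m block_mx (1%:M - Jq) Jq Jq (1%:M - Jq) = block_mx A11 A12 A21 A22.
Proof.
move=> l11 l22 l12 l21 r11 r22 r12 r21 eC.
rewrite !mulmx_block !mulmxBl !mul1mx l11 l22 l12 l21.
rewrite !mulmxBr !mulmx1 !mulmxDl ?mulmxBl ?mulmxBl !mulNmx !eC r11 r22 r12 r21.
rewrite !subrr !add0r !addr0.
congr block_mx.
- exact: z1.
- exact: z2.
- exact: z3.
- exact: z4.
Qed.

Theorem mainTheorem1 (G : grpType) (p q : nat) (hp : (0 < p)%N) (hq : (0 < q)%N)
    (A : 'M[CG G]_(p + p, q + q)) (r1 c1 r2 c2 : CG G) :
    const_row_sum (ulsubmx A) r1 -> const_row_sum (drsubmx A) r1 ->
    const_col_sum (ulsubmx A) c1 -> const_col_sum (drsubmx A) c1 ->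
    const_row_sum (ursubmx A) r2 -> const_row_sum (dlsubmx A) r2 ->
    const_col_sum (ursubmx A) c2 -> const_col_sum (dlsubmx A) c2 ->
    Qmx G p *m A *m Qmx G q = A.
Proof.
move=> h11r h22r h11c h22c h12r h21r h12c h21c.
have k1 := key _ _ _ hp hq _ _ _ h11r h11c.
have k2 := key _ _ _ hp hq _ _ _ h12r h12c.
rewrite -[A](submxK A) /Qmx.
move: (ulsubmx A) (ursubmx A) (dlsubmx A) (drsubmx A) h11r h22r h11c h22c h12r h21r h12c h21c => A11 A12 A21 A22 h11r h22r h11c h22c h12r h21r h12c h21c.
have l11 : Jmx_div G p *m A11 = const_mx (sc G p * c1) := mulJl _ _ _ _ _ h11c.
have l22 : Jmx_div G p *m A22 = const_mx (sc G p * c1) := mulJl _ _ _ _ _ h22c.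
have l12 : Jmx_div G p *m A12 = const_mx (sc G p * c2) := mulJl _ _ _ _ _ h12c.
have l21 : Jmx_div G p *m A21 = const_mx (sc G p * c2) := mulJl _ _ _ _ _ h21c.
have r11 : A11 *m Jmx_div G q = const_mx (sc G p * c1) := mulJr2 _ _ _ _ _ _ h11r k1.
have r22 : A22 *m Jmx_div G q = const_mx (sc G p * c1) := mulJr2 _ _ _ _ _ _ h22r k1.
have r12 : A12 *m Jmx_div G q = const_mx (sc G p * c2) := mulJr2 _ _ _ _ _ _ h12r k2.
have r21 : A21 *m Jmx_div G q = const_mx (sc G p * c2) := mulJr2 _ _ _ _ _ _ h21r k2.
have eC : forall x, (const_mx x : 'M_(p, q)) *m Jmx_div G q = const_mx x.
  by move=> x; apply: mulJc.
exact: (gen _ _ _ _ _ _ _ _ _ _ _ l11 l22 l12 l21 r11 r22 r12 r21 eC).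
Qed.
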